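(* Let $f:\mathbb{R}^n_{>0}\to\mathbb{R}^n_{>0}$ be order-preserving and homogeneous. Suppose $f$ has an eigenvector $u\in\mathbb{R}^n_{>0}$ with $\|u\|=1$ and $f$ is differentiable at $u$. If $\mathcal{G}(f'(u))$ has a unique final class, then every eigenvector of $f$ in $\mathbb{R}^n_{>0}$ is a scalar multiple of $u$. If, in addition, this final class is primitive, then $\lim_{k\to\infty}f^k(x)/\|f^k(x)\|=u$ for all $x\in\mathbb{R}^n_{>0}$.
   Context: $\|\cdot\|$ is a norm on $\mathbb{R}^n$; entrywise order. Order-preserving: $x\le y\Rightarrow f(x)\le f(y)$; homogeneous: $f(tx)=tf(x)$ for $t>0$. $f'(u)$ is the Jacobian matrix (a nonnegative matrix). For a nonnegative $n\times n$ matrix $A=[a_{ij}]$, $\mathcal{G}(A)$ is the directed graph on $[n]=\{1,\dots,n\}$ with an arc $i\to j$ when $a_{ij}\neq0$. A final class is a strongly connected component with no arcs leaving it. A strongly connected component is primitive if there is $m\in\mathbb{N}$ such that every ordered pair of its vertices is joined by a path of length exactly $m$. *)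

(* Defs.v *)
From HB Require Import structures.
From mathcomp Require Import all_boot all_order all_algebra.
From mathcomp Require Import all_classical all_reals all_analysis.
Set Implicit Arguments. Unset Strict Implicit. Unset Printing Implicit Defensive.
Import Order.TTheory GRing.Theory Num.Theory.
Import numFieldNormedType.Exports.
Local Open Scope ring_scope.

Section Defs.
Variable R : realType.
Variable n : nat.

Definition pos_vec (x : 'rV[R]_n) : Prop := forall i, 0 < x 0 i.

Definition le_vec (x y : 'rV[R]_n) : Prop := forall i, x 0 i <= y 0 i.

Definition is_norm (N : 'rV[R]_n -> R) : Prop :=
  [/\ forall x, 0 <= N x,
      forall x, N x = 0 -> x = 0,
      forall (a : R) x, N (a *: x) = `|a| * N x
    & forall x y, N (x + y) <= N x + N y].

Definition maps_pos (f : 'rV[R]_n -> 'rV[R]_n) : Prop :=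
  forall x, pos_vec x -> pos_vec (f x).

Definition order_preserving (f : 'rV[R]_n -> 'rV[R]_n) : Prop :=
  forall x y, pos_vec x -> pos_vec y -> le_vec x y -> le_vec (f x) (f y).

Definition homogeneous (f : 'rV[R]_n -> 'rV[R]_n) : Prop :=
  forall (t : R) x, 0 < t -> pos_vec x -> f (t *: x) = t *: f x.

Definition pos_eigenvector (f : 'rV[R]_n -> 'rV[R]_n) (v : 'rV[R]_n) : Prop :=
  pos_vec v /\ exists lambda : R, f v = lambda *: v.

(* Jacobian matrix f'(u) with entries (f'(u))_{ij} = d f_i / d x_j.
   MathComp-Analysis' 'J f u = lin1_mx ('d f u) has entry (i,j) = d f_j / d x_i,
   hence the transpose. *)
Definition jac (f : 'rV[R]_n -> 'rV[R]_n) (u : 'rV[R]_n) : 'M[R]_n :=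
  ('J f u)^T.

Definition arc (A : 'M[R]_n) : rel 'I_n := fun i j => A i j != 0.

Definition reach (A : 'M[R]_n) (i j : 'I_n) : Prop :=
  exists p : seq 'I_n, path (arc A) i p /\ last i p = j.

Definition walk_len (A : 'M[R]_n) (m : nat) (i j : 'I_n) : Prop :=
  exists p : seq 'I_n, [/\ size p = m, path (arc A) i p & last i p = j].

Definition scc (A : 'M[R]_n) (C : {set 'I_n}) : Prop :=
  [/\ exists i, i \in C,
      forall i j, i \in C -> j \in C -> reach A i j
    & forall i j, i \in C -> reach A i j -> reach A j i -> j \in C].

Definition final_class (A : 'M[R]_n) (C : {set 'I_n}) : Prop :=
  scc A C /\ forall i j, i \in C -> arc A i j -> j \in C.

Definition primitive_class (A : 'M[R]_n) (C : {set 'I_n}) : Prop :=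
  exists m : nat, (0 < m)%N /\ forall i j, i \in C -> j \in C -> walk_len A m i j.

End Defs.

(* Main.v *)
Require Import Defs.
From HB Require Import structures.
From mathcomp Require Import all_boot all_order all_algebra.
From mathcomp Require Import all_classical all_reals all_analysis.
From mathcomp Require Import ring lra.
Set Implicit Arguments. Unset Strict Implicit. Unset Printing Implicit Defensive.
Import Order.TTheory GRing.Theory Num.Theory.
Import numFieldNormedType.Exports.
Local Open Scope ring_scope.
Local Open Scope classical_set_scope.

Section Aux.
Variable R : realType.

Lemma lim_right0 (phi : R -> R) l d : 0 < d ->
  phi x @[x --> 0^'] --> l -> (forall h, 0 < h <= d -> phi h = 0) -> l = 0.
Proof.
move=> d0 H H0; apply/eqP; apply/negPn/negP => l0.
have e0 : 0 < `|l| by rewrite normr_gt0.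
have := (@cvgrPdist_lt _ _ _ (0^') _ phi l).1 H _ e0.
have FF : Filter (0^' : set_system R) by exact: _.
rewrite /dnbhs /within /= in FF *; move=> /(_ FF) /nbhs_ballP [r r0 Hr].
pose h := Num.min d (r / 2).
have h0 : 0 < h by rewrite lt_min d0 divr_gt0.
have hd : h <= d by rewrite ge_min lexx.
have hr : h < r.
  apply: (le_lt_trans (y := r / 2)); first by rewrite ge_min lexx orbT.
  by rewrite ltr_pdivrMr // ltr_pMr // ltr1n.
have := Hr h; rewrite /ball /= sub0r normrN gtr0_norm // => /(_ hr).
by rewrite gt_eqF // H0 ?h0 ?hd // subr0 ltxx => /(_ isT).
Qed.
End Aux.

Section Deriv.
Variables (R : realType) (n : nat) (f : 'rV[R]_n -> 'rV[R]_n) (u : 'rV[R]_n).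

Lemma deriv_entry0 (v : 'rV[R]_n) i d : differentiable f u -> 0 < d ->
  (forall h, 0 < h <= d -> f (h *: v + u) 0 i = f u 0 i) ->
  (v *m 'J f u) 0 i = 0.
Proof.
move=> df d0 H0; rewrite -deriveEjacobian //.
have dv := @diff_derivable _ _ _ f u v df.
have Hc : (fun h => (h^-1 *: ((f \o shift u) (h *: v) - f u)) 0 i)
           @ 0^' --> ('D_v f u) 0 i.
  have := @continuous_cvg _ _ _ _ _ _ (fun M : 'rV[R]_n => M 0 i) _
    (@coord_continuous R 1 n 0 i _) dv.
  rewrite /derive; exact.
apply: (@lim_right0 R _ _ _ d0 Hc) => h /H0 Hh.
by rewrite /= !mxE Hh subrr mulr0.
Qed.
End Deriv.

Section L12.
Variables (R : realType) (n : nat) (f : 'rV[R]_n -> 'rV[R]_n) (u : 'rV[R]_n) (lam : R).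
Hypotheses (fop : order_preserving f) (upos : pos_vec u) (fu : f u = lam *: u)
  (df : differentiable f u).
Local Notation ev j := (delta_mx 0 j : 'rV[R]_n).

Lemma jac_entry i j : jac f u i j = ((ev j) *m 'J f u) 0 i.
Proof. by rewrite /jac mxE -rowE [RHS]mxE. Qed.

Lemma ej_entry (h : R) j k : (h *: (ev j) + u) 0 k = (if k == j then h else 0) + u 0 k.
Proof. by rewrite !mxE eqxx /=; case: eqP => _; rewrite ?mulr1 ?mulr0. Qed.

Lemma fu_entry i : f u 0 i = lam * u 0 i.
Proof. by rewrite fu mxE. Qed.

Lemma L1 y i j : pos_vec y -> le_vec u y -> Defs.arc (jac f u) i j -> u 0 j < y 0 j ->
  lam * u 0 i < f y 0 i.
Proof.
move=> ypos uy; rewrite /Defs.arc => Harc ujy.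
rewrite ltNge; apply/negP => Hle; move: Harc; apply/negP; rewrite negbK.
rewrite jac_entry (@deriv_entry0 R n f u _ i (y 0 j - u 0 j)) ?subr_gt0 //.
move=> h /andP[h0 hd].
have wpos : pos_vec (h *: (ev j) + u).
  move=> k; rewrite ej_entry; case: eqP => _; last by rewrite add0r.
  by rewrite addr_gt0.
have uw : le_vec u (h *: (ev j) + u).
  move=> k; rewrite ej_entry; case: eqP => _; last by rewrite add0r.
  by rewrite lerDr ltW.
have wy : le_vec (h *: (ev j) + u) y.
  move=> k; rewrite ej_entry; case: eqP => [->|_]; last by rewrite add0r.
  by rewrite -lerBrDr.
apply/le_anti/andP; split.
  apply: (le_trans (fop wpos ypos wy i)); by rewrite fu_entry.
exact: (fop upos wpos uw i).
Qed.

Lemma ej_entryN (h : R) j k : (h *: - (ev j) + u) 0 k = u 0 k - (if k == j then h else 0).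
Proof. by rewrite scalerN !mxE eqxx /=; case: eqP => _ /=; rewrite ?mulr1 ?mulr0 ?oppr0 ?add0r ?subr0 ?addr0 // addrC. Qed.

Lemma L2 y i j : pos_vec y -> le_vec y u -> Defs.arc (jac f u) i j -> y 0 j < u 0 j ->
  f y 0 i < lam * u 0 i.
Proof.
move=> ypos uy; rewrite /Defs.arc => Harc ujy.
rewrite ltNge; apply/negP => Hle; move: Harc; apply/negP; rewrite negbK.
have E : ((ev j) *m 'J f u) 0 i = - ((- ev j) *m 'J f u) 0 i by rewrite mulNmx [in RHS]mxE opprK.
rewrite jac_entry E.
rewrite (@deriv_entry0 R n f u _ i (u 0 j - y 0 j)) ?subr_gt0 ?oppr0 //.
move=> h /andP[h0 hd].
have wpos : pos_vec (h *: - (ev j) + u).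
  move=> k; rewrite ej_entryN; case: eqP => [->|_]; last by rewrite subr0.
  by have := ypos j; lra.
have uw : le_vec (h *: - (ev j) + u) u.
  move=> k; rewrite ej_entryN; case: eqP => _; last by rewrite subr0.
  by rewrite lerBlDr lerDl ltW.
have wy : le_vec y (h *: - (ev j) + u).
  move=> k; rewrite ej_entryN; case: eqP => [->|_]; last by rewrite subr0.
  by rewrite lerBrDr -lerBrDl.
apply/le_anti/andP; split.
  exact: (fop wpos upos uw i).
apply: (le_trans _ (fop ypos wpos wy i)); by rewrite fu_entry.
Qed.
End L12.

Section Graph.
Variables (R : realType) (n : nat) (A : 'M[R]_n).
Local Notation e := (Defs.arc A).

Lemma reachP i j : reach A i j <-> connect e i j.
Proof.
split => [[p [Hp Hl]]|/connectP [p Hp Hl]]; first by apply/connectP; exists p.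
by exists p.
Qed.

Lemma closed_connect (S : {set 'I_n}) :
  (forall i j, i \in S -> e i j -> j \in S) ->
  forall i j, i \in S -> connect e i j -> j \in S.
Proof.
move=> HS i j iS /connectP [p Hp ->]; elim: p i iS Hp => [//|k p IH] i iS /= /andP[eik Hp].
exact: (IH k (HS _ _ iS eik) Hp).
Qed.

Lemma closed_final (S : {set 'I_n}) i0 : i0 \in S ->
  (forall i j, i \in S -> e i j -> j \in S) ->
  exists C, final_class A C /\ C \subset S.
Proof.
move=> i0S HS.
pose Rs i := [set j | connect e i j]%SET.
case: (@arg_minnP _ i0 (mem S) (fun i => #|Rs i|) i0S) => i iS Hmin.
have key : forall j, j \in Rs i -> Rs j = Rs i.
  move=> j cij; have {}cij : connect e i j by move: cij; rewrite inE.
  apply/eqP; rewrite (eqEcard (Rs j) (Rs i)); apply/andP; split.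
    apply/fintype.subsetP => k; rewrite !inE => cjk; exact: connect_trans cij cjk.
  have jS : j \in S := closed_connect HS iS cij.
  exact: Hmin jS.
exists (Rs i); split; last first.
  apply/fintype.subsetP => j; rewrite inE => cij; exact: (closed_connect HS iS cij).
split; first split.
- by exists i; rewrite inE connect0.
- move=> j k jC kC; apply/reachP; move: kC; rewrite -(key j jC) inE //.
- move=> j k; rewrite !inE => cij /reachP cjk _; exact: connect_trans cij cjk.
- move=> j k; rewrite !inE => cij ejk; apply: connect_trans cij _; exact: connect1.
Qed.

Lemma reach_final C : (exists! C, final_class A C) -> final_class A C ->
  forall i, exists2 c, c \in C & connect e i c.
Proof.
move=> [C0 [HC0 Hu]] HC i.
have i0S : i \in [set j | connect e i j]%SET by rewrite inE connect0.
have HS : forall j k, j \in [set j | connect e i j]%SET -> e j k ->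
    k \in [set j | connect e i j]%SET.
  by move=> j k; rewrite !inE => cij ejk; apply: connect_trans cij (connect1 ejk).
have [C' [HC' sub]] := closed_final i0S HS.
have eC : C = C' by rewrite -(Hu _ HC) (Hu _ HC').
case: HC => [[[c cC] _ _] _]; exists c => //.
by move: cC; rewrite eC => /(fintype.subsetP sub); rewrite inE.
Qed.

Lemma walk_cat a b i j k : walk_len A a i j -> walk_len A b j k -> walk_len A (a + b) i k.
Proof.
move=> [p [sp Hp lp]] [q [sq Hq lq]]; exists (p ++ q); split.
- by rewrite size_cat sp sq.
- by rewrite cat_path Hp lp Hq.
- by rewrite last_cat lp.
Qed.

Lemma walk0 i : walk_len A 0 i i.
Proof. by exists [::]. Qed.

Lemma walk1 i j : e i j -> walk_len A 1 i j.
Proof. by move=> eij; exists [:: j]; rewrite /= eij. Qed.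

Lemma prim_walk C c : (exists! C, final_class A C) -> final_class A C ->
  primitive_class A C -> c \in C -> exists p, forall i, walk_len A p i c.
Proof.
move=> Hu HC [m [m0 Hm]] cC.
have Cfin := HC.2.
have out : forall d, d \in C -> exists2 d', d' \in C & e d d'.
  move=> d dC; have [p [sp Hp _]] := Hm d d dC dC.
  case: p sp Hp => [|d' p] /=; first by move=> sp; rewrite -sp in m0.
  move=> _ /andP[edd' _]; exists d' => //; exact: Cfin _ _ dC edd'.
have step : forall r d, d \in C -> exists2 d', d' \in C & walk_len A r d d'.
  elim=> [|r IH] d dC; first by exists d => //; exact: walk0.
  have [d' d'C w] := IH d dC; have [d'' d''C ed] := out d' d'C.
  exists d'' => //; rewrite -addn1; apply: walk_cat w (walk1 ed).
have longer : forall q d, (m <= q)%N -> d \in C -> walk_len A q d c.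
  move=> q d mq dC; have [d' d'C w] := step (q - m)%N d dC.
  rewrite -(subnK mq); exact: walk_cat w (Hm _ _ d'C cC).
have each : forall i, exists K, forall q, (K + m <= q)%N -> walk_len A q i c.
  move=> i; have [c' c'C /connectP [p Hp lp]] := reach_final Hu HC i.
  exists (size p) => q Kq.
  have w1 : walk_len A (size p) i c' by exists p.
  rewrite -(subnKC (leq_trans (leq_addr m _) Kq)).
  apply: walk_cat w1 (longer _ _ _ c'C); by rewrite leq_subRL // (leq_trans (leq_addr m _) Kq).
have [K HK] := fin_all_exists each.
exists ((\max_i K i) + m)%N => i; apply: HK.
by rewrite leq_add2r (leq_bigmax i).
Qed.
End Graph.

Lemma argmin_ex (R : realType) (I : finType) (i0 : I) (F : I -> R) :
  exists k, forall i, F k <= F i.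
Proof.
case: (@arg_minP _ _ I i0 xpredT F isT) => k _ H; exists k => i; exact: H.
Qed.

Lemma argmax_ex (R : realType) (I : finType) (i0 : I) (F : I -> R) :
  exists k, forall i, F i <= F k.
Proof.
case: (@arg_maxP _ _ I i0 xpredT F isT) => k _ H; exists k => i; exact: H.
Qed.

Section P1.
Variables (R : realType) (n : nat) (f : 'rV[R]_n -> 'rV[R]_n) (u : 'rV[R]_n) (lam : R).
Hypotheses (fop : order_preserving f) (fhom : homogeneous f)
  (upos : pos_vec u) (fu : f u = lam *: u) (df : differentiable f u).
Variable C0 : {set 'I_n}.
Hypotheses (HC0 : final_class (jac f u) C0) (Hu : exists! C, final_class (jac f u) C).

Lemma uniq_final C : final_class (jac f u) C -> C = C0.
Proof. by case: Hu => C1 [_ H] HC; rewrite -(H _ HC) (H _ HC0). Qed.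

Lemma min_side w k : pos_vec w -> le_vec u w -> w 0 k = u 0 k -> f w = lam *: w ->
  forall c, c \in C0 -> w 0 c = u 0 c.
Proof.
move=> wpos uw wk fw.
pose S := [set i | w 0 i == u 0 i]%SET.
have kS : k \in S by rewrite inE wk.
have HS : forall i j, i \in S -> Defs.arc (jac f u) i j -> j \in S.
  move=> i j; rewrite !inE => /eqP wi aij; apply/negPn/negP => wj.
  have ujw : u 0 j < w 0 j by rewrite lt_neqAle eq_sym wj uw.
  have := L1 fop upos fu df wpos uw aij ujw.
  by rewrite fw mxE wi ltxx.
have [C [HC sub]] := closed_final kS HS.
move=> c; rewrite -(uniq_final HC) => /(fintype.subsetP sub); rewrite inE => /eqP //.
Qed.

Lemma max_side w k : pos_vec w -> le_vec w u -> w 0 k = u 0 k -> f w = lam *: w ->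
  forall c, c \in C0 -> w 0 c = u 0 c.
Proof.
move=> wpos uw wk fw.
pose S := [set i | w 0 i == u 0 i]%SET.
have kS : k \in S by rewrite inE wk.
have HS : forall i j, i \in S -> Defs.arc (jac f u) i j -> j \in S.
  move=> i j; rewrite !inE => /eqP wi aij; apply/negPn/negP => wj.
  have ujw : w 0 j < u 0 j by rewrite lt_neqAle wj uw.
  have := L2 fop upos fu df wpos uw aij ujw.
  by rewrite fw mxE wi ltxx.
have [C [HC sub]] := closed_final kS HS.
move=> c; rewrite -(uniq_final HC) => /(fintype.subsetP sub); rewrite inE => /eqP //.
Qed.

Lemma part1 v mu : pos_vec v -> f v = mu *: v -> exists t : R, v = t *: u.
Proof.
move=> vpos fv.
case: HC0 => [[[c cC] _ _] _].
pose r i := v 0 i / u 0 i.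
have [kmin Hmin] := argmin_ex c r.
have [kmax Hmax] := argmax_ex c r.
set a := r kmin; set b := r kmax.
have a0 : 0 < a by rewrite /a /r divr_gt0.
have b0 : 0 < b by rewrite /b /r divr_gt0.
pose v1 := a^-1 *: v; pose v2 := b^-1 *: v.
have v1e i : v1 0 i = v 0 i / a by rewrite mxE mulrC.
have v2e i : v2 0 i = v 0 i / b by rewrite mxE mulrC.
have v1pos : pos_vec v1 by move=> i; rewrite v1e divr_gt0.
have v2pos : pos_vec v2 by move=> i; rewrite v2e divr_gt0.
have uv1 : le_vec u v1.
  move=> i; rewrite v1e ler_pdivlMr // mulrC -ler_pdivlMr //; exact: Hmin.
have v2u : le_vec v2 u.
  move=> i; rewrite v2e ler_pdivrMr // mulrC -ler_pdivrMr //; exact: Hmax.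
have v1k : v1 0 kmin = u 0 kmin.
  by rewrite v1e /a /r invf_div mulrCA mulfV ?mulr1 // gt_eqF.
have v2k : v2 0 kmax = u 0 kmax.
  by rewrite v2e /b /r invf_div mulrCA mulfV ?mulr1 // gt_eqF.
have fv1 : f v1 = mu *: v1 by rewrite /v1 fhom ?invr_gt0 // fv !scalerA mulrC.
have fv2 : f v2 = mu *: v2 by rewrite /v2 fhom ?invr_gt0 // fv !scalerA mulrC.
have lm : lam <= mu.
  have key : (mu *: v1) 0 kmin = mu * u 0 kmin by rewrite mxE v1k.
  have := fop upos v1pos uv1 kmin; rewrite fu fv1 key mxE.
  by rewrite ler_pM2r.
have ml : mu <= lam.
  have key : (mu *: v2) 0 kmax = mu * u 0 kmax by rewrite mxE v2k.
  have := fop v2pos upos v2u kmax; rewrite fu fv2 key mxE.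
  by rewrite ler_pM2r.
have eml : mu = lam by apply/le_anti; rewrite lm ml.
rewrite eml in fv1 fv2.
have e1 := min_side v1pos uv1 v1k fv1 cC.
have e2 := max_side v2pos v2u v2k fv2 cC.
have ab : a = b.
  move: e1 e2; rewrite v1e v2e => e1 e2.
  have : v 0 c / a = v 0 c / b by rewrite e1 e2.
  move/(congr1 GRing.inv); rewrite !invf_div => /(congr1 (fun x => x * v 0 c)).
  by rewrite !divfK ?gt_eqF.
exists a; apply/rowP => i; rewrite mxE.
have : a <= r i <= a by rewrite Hmin ab Hmax.
move/le_anti; rewrite /r => /(congr1 (fun x => x * u 0 i)).
by rewrite divfK ?gt_eqF // => ->; rewrite mulrC.
Qed.
End P1.

Section P2.
Variables (R : realType) (n : nat) (f : 'rV[R]_n -> 'rV[R]_n) (u : 'rV[R]_n) (lam : R).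
Hypotheses (fmap : maps_pos f) (fop : order_preserving f) (fhom : homogeneous f)
  (upos : pos_vec u) (fu : f u = lam *: u) (df : differentiable f u).
Variable C0 : {set 'I_n}.
Hypotheses (HC0 : final_class (jac f u) C0) (Hu : exists! C, final_class (jac f u) C)
  (Hprim : primitive_class (jac f u) C0).
Variable c : 'I_n.
Hypothesis cC : c \in C0.

Lemma lam_gt0 : 0 < lam.
Proof.
have := fmap upos c; rewrite fu mxE => H.
by rewrite -(pmulr_lgt0 _ (upos c)).
Qed.

Definition g (y : 'rV[R]_n) := lam^-1 *: f y.

Lemma g_entry y i : g y 0 i = f y 0 i / lam.
Proof. by rewrite mxE mulrC. Qed.

Lemma gpos : maps_pos g.
Proof. by move=> y ypos i; rewrite g_entry divr_gt0 // ?lam_gt0 //; apply: fmap. Qed.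

Lemma gop : order_preserving g.
Proof.
move=> y z ypos zpos yz i; rewrite !g_entry ler_pdivrMr ?lam_gt0 // divfK ?gt_eqF ?lam_gt0 //.
exact: fop.
Qed.

Lemma ghom : homogeneous g.
Proof. by move=> t y t0 ypos; rewrite /g fhom // !scalerA mulrC. Qed.

Lemma gu : g u = u.
Proof. by rewrite /g fu scalerA mulVf ?scale1r // gt_eqF ?lam_gt0. Qed.

Lemma gL1 y i j : pos_vec y -> le_vec u y -> Defs.arc (jac f u) i j -> u 0 j < y 0 j ->
  u 0 i < g y 0 i.
Proof.
move=> ypos uy aij ujy; rewrite g_entry ltr_pdivlMr ?lam_gt0 // mulrC.
exact: (L1 fop upos fu df ypos uy aij ujy).
Qed.

Lemma gL2 y i j : pos_vec y -> le_vec y u -> Defs.arc (jac f u) i j -> y 0 j < u 0 j ->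
  g y 0 i < u 0 i.
Proof.
move=> ypos uy aij ujy; rewrite g_entry ltr_pdivrMr ?lam_gt0 // mulrC.
exact: (L2 fop upos fu df ypos uy aij ujy).
Qed.

Lemma iter_pos k y : pos_vec y -> pos_vec (iter k g y).
Proof. by move=> ypos; elim: k => [|k IH] //=; apply: gpos. Qed.

Lemma iter_op k y z : pos_vec y -> pos_vec z -> le_vec y z -> le_vec (iter k g y) (iter k g z).
Proof.
move=> ypos zpos yz; elim: k => [|k IH] //=; apply: gop => //; exact: iter_pos.
Qed.

Lemma iter_hom k t y : 0 < t -> pos_vec y -> iter k g (t *: y) = t *: iter k g y.
Proof.
move=> t0 ypos; elim: k => [|k IH] //=; rewrite IH ghom //; exact: iter_pos.
Qed.

Lemma iter_u k : iter k g u = u.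
Proof. by elim: k => [|k IH] //=; rewrite IH gu. Qed.

Lemma le_vec_refl (y : 'rV[R]_n) : le_vec y y.
Proof. by move=> i. Qed.

Lemma le_vec_trans (x y z : 'rV[R]_n) : le_vec x y -> le_vec y z -> le_vec x z.
Proof. by move=> H1 H2 i; apply: le_trans (H1 i) (H2 i). Qed.

Lemma uy_iter k y : pos_vec y -> le_vec u y -> le_vec u (iter k g y).
Proof. by move=> ypos uy; rewrite -(iter_u k); apply: iter_op. Qed.

Lemma yu_iter k y : pos_vec y -> le_vec y u -> le_vec (iter k g y) u.
Proof. by move=> ypos uy; rewrite -[X in le_vec _ X](iter_u k); apply: iter_op. Qed.

Lemma WP1 p : forall i j y, pos_vec y -> le_vec u y -> walk_len (jac f u) p i j ->
  u 0 j < y 0 j -> u 0 i < iter p g y 0 i.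
Proof.
elim: p => [|p IH] i j y ypos uy [s [ss Hs ls]] ujy.
  by case: s ss Hs ls => //= _ _ ->.
case: s ss Hs ls => [//|k s] /= [ss] /andP[aik Hs] ls.
apply: gL1 (aik) _ => //; first exact: iter_pos.
  exact: uy_iter.
apply: (IH k j) => //; by exists s.
Qed.

Lemma WP2 p : forall i j y, pos_vec y -> le_vec y u -> walk_len (jac f u) p i j ->
  y 0 j < u 0 j -> iter p g y 0 i < u 0 i.
Proof.
elim: p => [|p IH] i j y ypos uy [s [ss Hs ls]] ujy.
  by case: s ss Hs ls => //= _ _ ->.
case: s ss Hs ls => [//|k s] /= [ss] /andP[aik Hs] ls.
apply: gL2 (aik) _ => //; first exact: iter_pos.
  exact: yu_iter.
apply: (IH k j) => //; by exists s.
Qed.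

Lemma iter_f k y : pos_vec y -> iter k f y = lam ^+ k *: iter k g y.
Proof.
move=> ypos; elim: k => [|k IH] /=; first by rewrite expr0 scale1r.
rewrite IH fhom ?exprn_gt0 ?lam_gt0 //; last exact: iter_pos.
by rewrite /g scalerA exprS mulrC mulrA mulVf ?gt_eqF ?lam_gt0 // mul1r.
Qed.


Lemma caseA y s : pos_vec y -> 0 < s -> le_vec (s *: u) y -> s * u 0 c < y 0 c ->
  exists p th, s < th /\ le_vec (th *: u) (iter p g y).
Proof.
move=> ypos s0 suy syc.
have [p Hp] := prim_walk Hu HC0 Hprim cC.
pose y' := s^-1 *: y.
have y'e i : y' 0 i = y 0 i / s by rewrite mxE mulrC.
have y'pos : pos_vec y' by move=> i; rewrite y'e divr_gt0.
have uy' : le_vec u y'.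
  move=> i; rewrite y'e ler_pdivlMr // mulrC; have := suy i; by rewrite mxE.
have uyc : u 0 c < y' 0 c by rewrite y'e ltr_pdivlMr // mulrC.
have H i : u 0 i < iter p g y' 0 i := WP1 y'pos uy' (Hp i) uyc.
pose z := iter p g y'.
have [k Hk] := argmin_ex c (fun i => z 0 i / u 0 i).
have th1 : 1 < z 0 k / u 0 k by rewrite ltr_pdivlMr // mul1r; exact: H.
exists p, (s * (z 0 k / u 0 k)); split; first by rewrite ltr_pMr.
have ye : y = s *: y' by rewrite /y' scalerA mulfV ?gt_eqF // scale1r.
rewrite ye iter_hom // => i; rewrite !mxE -mulrA ler_pM2l //.
rewrite -ler_pdivlMr //; exact: Hk.
Qed.

Lemma caseB y s : pos_vec y -> 0 < s -> le_vec y (s *: u) -> y 0 c < s * u 0 c ->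
  exists p th, th < s /\ le_vec (iter p g y) (th *: u).
Proof.
move=> ypos s0 suy syc.
have [p Hp] := prim_walk Hu HC0 Hprim cC.
pose y' := s^-1 *: y.
have y'e i : y' 0 i = y 0 i / s by rewrite mxE mulrC.
have y'pos : pos_vec y' by move=> i; rewrite y'e divr_gt0.
have uy' : le_vec y' u.
  move=> i; rewrite y'e ler_pdivrMr // mulrC; have := suy i; by rewrite mxE.
have uyc : y' 0 c < u 0 c by rewrite y'e ltr_pdivrMr // mulrC.
have H i : iter p g y' 0 i < u 0 i := WP2 y'pos uy' (Hp i) uyc.
pose z := iter p g y'.
have [k Hk] := argmax_ex c (fun i => z 0 i / u 0 i).
have th1 : z 0 k / u 0 k < 1 by rewrite ltr_pdivrMr // mul1r; exact: H.
exists p, (s * (z 0 k / u 0 k)); split; first by rewrite gtr_pMr.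
have ye : y = s *: y' by rewrite /y' scalerA mulfV ?gt_eqF // scale1r.
rewrite ye iter_hom // => i; rewrite !mxE -mulrA ler_pM2l //.
rewrite -ler_pdivrMr //; exact: Hk.
Qed.


Lemma conv_g x : pos_vec x -> exists2 s, 0 < s & (fun k => iter k g x) @ \oo --> s *: u.
Proof.
move=> xpos.
pose xs k := iter k g x.
have xspos k : pos_vec (xs k) := iter_pos k xpos.
pose r (y : 'rV[R]_n) i := y 0 i / u 0 i.
pose mlo y := \big[Order.min/r y c]_i r y i.
pose mhi y := \big[Order.max/r y c]_i r y i.
have mlo_le y i : mlo y <= r y i by apply: bigmin_le.
have mhi_ge y i : r y i <= mhi y by apply: le_bigmax.
have mlo_vec y : le_vec (mlo y *: u) y.
  by move=> i; rewrite mxE -ler_pdivlMr //; apply: mlo_le.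
have mhi_vec y : le_vec y (mhi y *: u).
  by move=> i; rewrite mxE -ler_pdivrMr //; apply: mhi_ge.
have mlo_max y a : le_vec (a *: u) y -> a <= mlo y.
  move=> H; apply: le_bigmin => [|i _]; rewrite /r ler_pdivlMr //;
  [have := H c | have := H i]; by rewrite mxE.
have mhi_min y a : le_vec y (a *: u) -> mhi y <= a.
  move=> H; apply: bigmax_le => [|i _]; rewrite /r ler_pdivrMr //;
  [have := H c | have := H i]; by rewrite mxE.
have mlo_pos y : pos_vec y -> 0 < mlo y.
  move=> ypos; apply: lt_bigmin => [|i _]; by rewrite /r divr_gt0.
pose m k := mlo (xs k); pose M k := mhi (xs k).
have m_pos k : 0 < m k by apply: mlo_pos.
have m_step k : m k <= m k.+1.
  apply: mlo_max; rewrite /xs iterS -gu -ghom //.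
  apply: gop; [by move=> i; rewrite mxE mulr_gt0 | exact: xspos | exact: mlo_vec].
have M_pos k : 0 < M k.
  apply: (lt_le_trans (m_pos k)); exact: le_trans (mlo_le _ c) (mhi_ge _ c).
have M_step k : M k.+1 <= M k.
  apply: mhi_min; rewrite /xs iterS -gu -ghom //.
  apply: gop; [exact: xspos | by move=> i; rewrite mxE mulr_gt0 | exact: mhi_vec].
have m_mono k l : (k <= l)%N -> m k <= m l.
  move=> kl; rewrite -(subnKC kl); elim: (l - k)%N => [|j IH]; first by rewrite addn0.
  by rewrite addnS; apply: le_trans IH (m_step _).
have M_mono k l : (k <= l)%N -> M l <= M k.
  move=> kl; rewrite -(subnKC kl); elim: (l - k)%N => [|j IH]; first by rewrite addn0.
  by rewrite addnS; apply: le_trans (M_step _) IH.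
have m_le_M k l : m k <= M l.
  apply: (le_trans (m_mono k (maxn k l) (leq_maxl _ _))).
  apply: (le_trans _ (M_mono l (maxn k l) (leq_maxr _ _))).
  exact: le_trans (mlo_le _ c) (mhi_ge _ c).
have hsup : has_sup (range m).
  split; first by exists (m 0%N), 0%N.
  by exists (M 0%N) => _ [k _ <-]; apply: m_le_M.
have hinf : has_inf (range M).
  split; first by exists (M 0%N), 0%N.
  by exists (m 0%N) => _ [k _ <-]; apply: m_le_M.
pose ms := sup (range m); pose Ms := inf (range M).
have m_ub k : m k <= ms by apply: (ub_le_sup hsup.2); exists k.
have M_lb k : Ms <= M k by apply: (ge_inf hinf.2); exists k.
have ms0 : 0 < ms by apply: lt_le_trans (m_pos 0%N) (m_ub 0%N).
pose A i := `[m 0%N * u 0 i, M 0%N * u 0 i]%classic.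
have hB : compact [set v : 'rV[R]_n | forall i, A i (v ord0 i)].
  by apply: rV_compact => i; apply: segment_compact.
have FB : ((fun k => xs k) @ \oo) [set v : 'rV[R]_n | forall i, A i (v ord0 i)].
  exists 0%N => // k _ i /=; rewrite /A /= in_itv /=; apply/andP; split.
    apply: le_trans (mlo_vec (xs k) i); rewrite mxE ler_pM2r //; exact: m_mono.
  apply: le_trans (mhi_vec (xs k) i) _; rewrite mxE ler_pM2r //; exact: M_mono.
have [y [By cly]] := hB _ _ FB.
have ypos : pos_vec y.
  move=> i; have := By i; rewrite /A /= in_itv /= => /andP[+ _].
  by apply: lt_le_trans; rewrite mulr_gt0.
have [k0 Hk0] := argmin_ex c (fun i => u 0 i).
have approx : forall d, 0 < d -> forall K, exists k, (K <= k)%N /\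
    forall i, `|r y i - r (xs k) i| < d.
  move=> d d0 K.
  have e0 : 0 < d * u 0 k0 by rewrite mulr_gt0.
  have FA : ((fun k => xs k) @ \oo) [set w | exists2 k, (K <= k)%N & w = xs k].
    by exists K => // k /= Kk; exists k.
  have [w [[k Kk ->] Hb]] := cly _ _ FA (nbhsx_ballx y _ e0).
  exists k; split => // i.
  case: Hb => _ /(_ ord0 i); rewrite /ball /= => Hb.
  rewrite /r -mulrBl normrM normfV (gtr0_norm (upos i)) ltr_pdivrMr //.
  apply: lt_le_trans Hb _; rewrite ler_pM2l //.
have ylo i : ms <= r y i.
  rewrite leNgt; apply/negP => H.
  have d0 : 0 < (ms - r y i) / 2 by rewrite divr_gt0 // subr_gt0.
  have [_ [k1 _ <-] He] := sup_adherent d0 hsup.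
  have [k [k1k Hk]] := approx _ d0 k1.
  move: (Hk i); rewrite ltr_norml => /andP[h1 h2].
  move: (m_mono _ _ k1k) (mlo_le (xs k) i) He h1 h2; rewrite /m /ms; lra.
have yhi i : r y i <= Ms.
  rewrite leNgt; apply/negP => H.
  have d0 : 0 < (r y i - Ms) / 2 by rewrite divr_gt0 // subr_gt0.
  have [_ [k1 _ <-] He] := inf_adherent d0 hinf.
  have [k [k1k Hk]] := approx _ d0 k1.
  move: (Hk i); rewrite ltr_norml => /andP[h1 h2].
  move: (M_mono _ _ k1k) (mhi_ge (xs k) i) He h1 h2; rewrite /M /Ms; lra.
have sy : le_vec (ms *: u) y.
  by move=> i; rewrite mxE -ler_pdivlMr //; exact: ylo.
have yS : le_vec y (Ms *: u).
  by move=> i; rewrite mxE -ler_pdivrMr //; exact: yhi.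
have Ms0 : 0 < Ms by apply: lt_le_trans ms0 (le_trans (ylo c) (yhi c)).
have scl (a b : 'rV[R]_n) t : le_vec a b -> 0 <= t -> le_vec (t *: a) (t *: b).
  by move=> ab t0 i; rewrite !mxE ler_wpM2l.
have ry i : y 0 i = r y i * u 0 i by rewrite /r divfK ?gt_eqF.
have rx k i : xs k 0 i = r (xs k) i * u 0 i by rewrite /r divfK ?gt_eqF.
have eqs : ms = Ms.
  case: (ltP (ms * u 0 c) (y 0 c)) => [hA | hA].
    exfalso.
    have [p [th [mth Hth]]] := caseA ypos ms0 sy hA.
    have th0 : 0 < th := lt_trans ms0 mth.
    pose rho := (th + ms) / (2 * th).
    have rhoth : rho * th = (th + ms) / 2.
      by rewrite /rho; field; rewrite gt_eqF.
    have rho0 : 0 < rho by rewrite /rho divr_gt0 ?addr_gt0 ?mulr_gt0.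
    have rho1 : rho < 1.
      by rewrite /rho ltr_pdivrMr ?mulr_gt0 // mul1r; lra.
    have d0 : 0 < (1 - rho) * ms by rewrite mulr_gt0 // subr_gt0.
    have [k [_ Hk]] := approx _ d0 0%N.
    have xk : le_vec (rho *: y) (xs k).
      move=> i; rewrite mxE ry rx mulrA ler_pM2r //.
      move: (Hk i); rewrite ltr_norml => /andP[h1 h2].
      have : (1 - rho) * ms <= (1 - rho) * r y i.
        by apply: ler_wpM2l; [rewrite subr_ge0 ltW | exact: ylo].
      lra.
    have H1 : le_vec (rho *: iter p g y) (xs (p + k)%N).
      rewrite /xs iterD -iter_hom //; apply: iter_op;
        [by move=> i; rewrite mxE mulr_gt0 | exact: xspos | exact: xk].
    have H2 : le_vec ((rho * th) *: u) (xs (p + k)%N).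
      apply: le_vec_trans H1; rewrite -scalerA; apply: scl => //; exact: ltW.
    have := le_trans (mlo_max _ _ H2) (m_ub (p + k)%N).
    rewrite rhoth; lra.
  case: (ltP (y 0 c) (Ms * u 0 c)) => [yB | yB].
    exfalso.
    have [p [th [mth Hth]]] := caseB ypos Ms0 yS yB.
    have th0 : 0 < th.
      have := lt_le_trans (iter_pos p ypos c) (Hth c); rewrite mxE.
      by rewrite pmulr_lgt0.
    pose rho := (th + Ms) / (2 * th).
    have rhoth : rho * th = (th + Ms) / 2.
      by rewrite /rho; field; rewrite gt_eqF.
    have rho1 : 1 < rho.
      by rewrite /rho ltr_pdivlMr ?mulr_gt0 // mul1r; lra.
    have rho0 : 0 < rho by apply: lt_trans rho1.
    have d0 : 0 < (rho - 1) * ms by rewrite mulr_gt0 // subr_gt0.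
    have [k [_ Hk]] := approx _ d0 0%N.
    have xk : le_vec (xs k) (rho *: y).
      move=> i; rewrite mxE ry rx mulrA ler_pM2r //.
      move: (Hk i); rewrite ltr_norml => /andP[h1 h2].
      have : (rho - 1) * ms <= (rho - 1) * r y i.
        by apply: ler_wpM2l; [rewrite subr_ge0 ltW | exact: ylo].
      lra.
    have H1 : le_vec (xs (p + k)%N) (rho *: iter p g y).
      rewrite /xs iterD -iter_hom //; apply: iter_op;
        [exact: xspos | by move=> i; rewrite mxE mulr_gt0 | exact: xk].
    have H2 : le_vec (xs (p + k)%N) ((rho * th) *: u).
      apply: le_vec_trans H1 _; rewrite -scalerA; apply: scl => //; exact: ltW.
    have := le_trans (M_lb (p + k)%N) (mhi_min _ _ H2).
    rewrite rhoth; lra.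
  apply/le_anti; rewrite (le_trans (ylo c) (yhi c)) /=.
  by rewrite -(ler_pM2r (upos c)); apply: le_trans yB hA.
exists ms => //.
apply/cvg_ballP => eps eps0.
have [kM HkM] := argmax_ex c (fun i => u 0 i).
have um0 : 0 < u 0 kM := upos kM.
have d0 : 0 < eps / u 0 kM by rewrite divr_gt0.
have [_ [k1 _ <-] H1] := sup_adherent d0 hsup.
have [_ [k2 _ <-] H2] := inf_adherent d0 hinf.
exists (maxn k1 k2) => // k /= Kk.
split => // i0 j.
have -> : i0 = 0 by case: i0 => [[|//] ?]; apply: val_inj.
rewrite /ball /= mxE rx -mulrBl normrM (gtr0_norm (upos j)).
apply: (lt_le_trans (y := eps / u 0 kM * u 0 j)).
  rewrite ltr_pM2r // ltr_norml.
  have e1 := m_mono k1 k (leq_trans (leq_maxl _ _) Kk).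
  have e2 := M_mono k2 k (leq_trans (leq_maxr _ _) Kk).
  move: (mlo_le (xs k) j) (mhi_ge (xs k) j) e1 e2 H1 H2; rewrite /m /M -/ms -/Ms -eqs.
  move=> a1 a2 a3 a4 a5 a6; apply/andP; split; lra.
by rewrite mulrAC ler_pdivrMr // ler_pM2l //; exact: HkM.
Qed.

End P2.

Section Norm.
Variables (R : realType) (n : nat) (N : 'rV[R]_n -> R).
Hypothesis HN : is_norm N.

Lemma N0 : N 0 = 0.
Proof. by case: HN => _ _ H3 _; rewrite -(scale0r 0) H3 normr0 mul0r. Qed.

Lemma N_sum (w : 'rV[R]_n) : N w <= \sum_(j < n) `|w 0 j| * N (delta_mx 0 j).
Proof.
case: HN => _ _ H3 H4.
rewrite {1}(row_sum_delta w).
apply: (big_rec2 (fun a b => N b <= a)); first by rewrite N0.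
move=> j y1 y2 _ H; apply: le_trans (H4 _ _) _.
by rewrite H3 lerD2l.
Qed.

Lemma N_dist (a b : 'rV[R]_n) : `|N a - N b| <= N (a - b).
Proof.
case: HN => _ _ H3 H4.
have h1 : N a <= N (a - b) + N b by rewrite -{1}(subrK b a) H4.
have h2 : N b <= N (a - b) + N a.
  have -> : N (a - b) = N (b - a) by rewrite -opprB -scaleN1r H3 normrN normr1 mul1r.
  by rewrite -{1}(subrK a b) H4.
rewrite ler_norml; apply/andP; split; lra.
Qed.

Lemma N_cont : continuous N.
Proof.
move=> l; have FF : Filter (nbhs l) by exact: nbhs_filter.
apply/(@cvgrPdist_lt _ _ _ _ FF) => e e0.
pose S := \sum_(j < n) N (delta_mx 0 j).
have S0 : 0 <= S by apply: sumr_ge0 => j _; case: HN => H1 _ _ _; exact: H1.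
have d0 : 0 < e / (S + 1) by rewrite divr_gt0 // ltr_wpDl.
apply/nbhs_ballP; exists (e / (S + 1)) => // w [_ Hw].
apply: le_lt_trans (N_dist _ _) _.
apply: le_lt_trans (N_sum _) _.
apply: (le_lt_trans (y := \sum_(j < n) e / (S + 1) * N (delta_mx 0 j))).
  apply: ler_sum => j _; apply: ler_wpM2r; first by case: HN => H1 _ _ _; exact: H1.
  by rewrite !mxE; have := Hw 0 j; rewrite /ball /= => /ltW.
rewrite -mulr_sumr -/S mulrAC ltr_pdivrMr ?ltr_wpDl // ltr_pM2l //.
by rewrite ltrDl.
Qed.
End Norm.

Unset Implicit Arguments.

Theorem theorem6p1 (R : realType) (n : nat) (N : 'rV[R]_n -> R)
    (f : 'rV[R]_n -> 'rV[R]_n) (u : 'rV[R]_n) :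
  is_norm N ->
  maps_pos f -> order_preserving f -> homogeneous f ->
  pos_eigenvector f u -> N u = 1 ->
  differentiable f u ->
  (exists! C : {set 'I_n}, final_class (jac f u) C) ->
  (forall v, pos_eigenvector f v -> exists t : R, v = t *: u) /\
  (forall C : {set 'I_n}, final_class (jac f u) C -> primitive_class (jac f u) C ->
     forall x, pos_vec x ->
       (fun k : nat => (N (iter k f x))^-1 *: iter k f x) @ \oo --> u).
Proof.
move=> HN fmap fop fhom [upos [lam fu]] Nu df Hu.
have [C0 [HC0 Huniq]] := Hu.
split.
  move=> v [vpos [mu fv]].
  exact: (part1 fop fhom upos fu df HC0 Hu vpos fv).
move=> C HC HP x xpos.
have [[[c cC] _ _] _] := HC.
have [s s0 Hs] := conv_g fmap fop fhom upos fu df HC Hu HP cC xpos.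
have lam0 : 0 < lam := lam_gt0 fmap upos fu c.
pose xs k := iter k (g f lam) x.
have E : (fun k => (N (iter k f x))^-1 *: iter k f x) = (fun k => (N (xs k))^-1 *: xs k).
  apply: funext => k; rewrite (iter_f fmap fhom upos fu c k xpos).
  case: HN => _ _ H3 _; rewrite H3 ger0_norm ?exprn_ge0 ?ltW // invfM scalerA mulrAC.
  by rewrite mulVf ?mul1r // expf_neq0 // gt_eqF.
rewrite E.
have Ns : N (s *: u) = s by case: HN => _ _ H3 _; rewrite H3 Nu mulr1 gtr0_norm.
have HNx : (fun k => N (xs k)) @ \oo --> s.
  rewrite -Ns; apply: continuous_cvg => //; exact: N_cont.
have sn0 : s != 0 by rewrite gt_eqF.
have := cvgZ (cvgV sn0 HNx) Hs.
rewrite scalerA mulVf // scale1r; apply; exact: _.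
Qed.
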